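(* Let ${\bf Y}$ be a set equipped with functions $d^\pi_Y$ ($Y\in{\bf Y}$) and a constant $\xi>0$ satisfying axioms (1)–(4) below, and let $\mathcal H(X,Z)$ be as defined below. If $(X',Z')\in\mathcal H(X,Z)$ and $Y\in{\bf Y}$ is distinct from $X,Z,X',Z'$, then $$d^\pi_Y(X,Z)-d^\pi_Y(X',Z')<2\xi.$$
   Context: Let ${\bf Y}$ be a set and for each $Y\in{\bf Y}$ let $d^\pi_Y:({\bf Y}\setminus\{Y\})\times({\bf Y}\setminus\{Y\})\to[0,\infty)$ be a function, and let $\xi>0$ be a constant, such that (1) $d^\pi_Y(X,Z)=d^\pi_Y(Z,X)$; (2) $d^\pi_Y(X,Z)+d^\pi_Y(Z,W)\ge d^\pi_Y(X,W)$; (3) for pairwise distinct $X,Y,Z$, $\min\{d^\pi_Y(X,Z),d^\pi_Z(X,Y)\}<\xi$; (4) for all $X,Z\in{\bf Y}$ the set $\{Y: d^\pi_Y(X,Z)\ge\xi\}$ is finite. For $X,Z\in{\bf Y}$, $\mathcal H(X,Z)$ is the set of pairs $(X',Z')\in{\bf Y}\times{\bf Y}$ such that one of the following holds: $d^\pi_X(X',Z')>2\xi$ and $d^\pi_Z(X',Z')>2\xi$; or $X'=X$ and $d^\pi_Z(X,Z')>2\xi$; or $Z'=Z$ and $d^\pi_X(X',Z)>2\xi$; or $(X',Z')=(X,Z)$. *)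

(* Defs.v *)
From Stdlib Require Import Reals List.
Open Scope R_scope.

(* The function
   d^pi_Y : (T\{Y}) x (T\{Y}) -> [0,oo) is encoded as a total function
   [d Y : T -> T -> R]; its values at arguments equal to Y are junk and
   never constrained or used. *)

Definition finite_pred {T : Type} (P : T -> Prop) : Prop :=
  exists l : list T, forall y, P y -> In y l.

Definition proj_axioms {T : Type} (d : T -> T -> T -> R) (xi : R) : Prop :=
  0 < xi /\
  (forall Y X Z, X <> Y -> Z <> Y -> 0 <= d Y X Z) /\
  (forall Y X Z, X <> Y -> Z <> Y -> d Y X Z = d Y Z X) /\
  (forall Y X Z W, X <> Y -> Z <> Y -> W <> Y ->
     d Y X Z + d Y Z W >= d Y X W) /\
  (forall X Y Z, X <> Y -> Y <> Z -> X <> Z ->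
     Rmin (d Y X Z) (d Z X Y) < xi) /\
  (forall X Z, finite_pred (fun Y => X <> Y /\ Z <> Y /\ d Y X Z >= xi)).

(* The set H(X,Z) of pairs (X',Z'); each clause includes the conditions
   needed for the d^pi values appearing in it to be defined. *)
Definition inH {T : Type} (d : T -> T -> T -> R) (xi : R) (X Z X' Z' : T) : Prop :=
  (X' <> X /\ Z' <> X /\ X' <> Z /\ Z' <> Z /\
     d X X' Z' > 2 * xi /\ d Z X' Z' > 2 * xi) \/
  (X' = X /\ X <> Z /\ Z' <> Z /\ d Z X Z' > 2 * xi) \/
  (Z' = Z /\ X' <> X /\ Z <> X /\ d X X' Z > 2 * xi) \/
  (X' = X /\ Z' = Z).

(* Main.v *)
Require Import Defs.
From Stdlib Require Import Reals Lra.
Open Scope R_scope.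

Lemma key (T : Type) (d : T -> T -> T -> R) (xi : R)
  (hax : proj_axioms d xi) (A P Q Y : T) :
  Y <> A -> P <> A -> Q <> A -> Y <> P -> Y <> Q -> d A P Q > 2 * xi ->
  d Y A P < xi \/ d Y A Q < xi.
Proof.
  destruct hax as [hxi [hnn [hsym [htri [h3 _]]]]].
  intros. 
  assert (t := htri A P Y Q ltac:(auto) ltac:(auto) ltac:(auto)).
  assert (m1 := h3 P A Y ltac:(auto) ltac:(auto) ltac:(auto)).
  assert (m2 := h3 Q A Y ltac:(auto) ltac:(auto) ltac:(auto)).
  rewrite (hsym A Y Q) in t by auto.
  rewrite (hsym Y P A) in m1 by auto.
  rewrite (hsym Y Q A) in m2 by auto.
  unfold Rmin in *.
  destruct (Rle_dec (d A P Y) (d Y A P)); destruct (Rle_dec (d A Q Y) (d Y A Q)); lra.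
Qed.

Theorem proposition2p2 (T : Type) (d : T -> T -> T -> R) (xi : R)
  (hax : proj_axioms d xi) (X Z X' Z' Y : T)
  (hH : inH d xi X Z X' Z')
  (hYX : Y <> X) (hYZ : Y <> Z) (hYX' : Y <> X') (hYZ' : Y <> Z') :
  d Y X Z - d Y X' Z' < 2 * xi.
Proof.
  pose proof hax as hax'.
  destruct hax' as [hxi [hnn [hsym [htri [h3 _]]]]].
  assert (nXZ' := hnn Y X' Z' ltac:(auto) ltac:(auto)).
  assert (sXZ := hsym Y X Z ltac:(auto) ltac:(auto)).
  assert (sXZ' := hsym Y X' Z' ltac:(auto) ltac:(auto)).
  assert (sXX' := hsym Y X X' ltac:(auto) ltac:(auto)).
  assert (sXZ2 := hsym Y X Z' ltac:(auto) ltac:(auto)).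
  assert (sZX' := hsym Y Z X' ltac:(auto) ltac:(auto)).
  assert (sZZ' := hsym Y Z Z' ltac:(auto) ltac:(auto)).
  assert (n1 := hnn Y X X' ltac:(auto) ltac:(auto)).
  assert (n2 := hnn Y X Z' ltac:(auto) ltac:(auto)).
  assert (n3 := hnn Y Z X' ltac:(auto) ltac:(auto)).
  assert (n4 := hnn Y Z Z' ltac:(auto) ltac:(auto)).
  assert (t1 := htri Y X X' Z ltac:(auto) ltac:(auto) ltac:(auto)).
  assert (t2 := htri Y X Z' Z ltac:(auto) ltac:(auto) ltac:(auto)).
  assert (t3 := htri Y X' Z' Z ltac:(auto) ltac:(auto) ltac:(auto)).
  assert (t4 := htri Y Z' X' Z ltac:(auto) ltac:(auto) ltac:(auto)).
  assert (t5 := htri Y X X' Z' ltac:(auto) ltac:(auto) ltac:(auto)).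
  assert (t6 := htri Y X Z' X' ltac:(auto) ltac:(auto) ltac:(auto)).
  assert (sZ'X' := hsym Y Z' X' ltac:(auto) ltac:(auto)).
  destruct hH as [[? [? [? [? [hA hB]]]]] | [[-> [? [? hB]]] | [[-> [? [? hA]]] | [-> ->]]]].
  - destruct (key T d xi hax X X' Z' Y) as [a|a]; auto;
    destruct (key T d xi hax Z X' Z' Y) as [b|b]; auto; lra.
  - destruct (key T d xi hax Z X Z' Y) as [b|b]; auto; lra.
  - destruct (key T d xi hax X X' Z Y) as [b|b]; auto; lra.
  - lra.
Qed.
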